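(* Let $M$ be the $8\times8$ matrix (rows and columns indexed $0,\dots,7$) \[ \begin{pmatrix} \frac18&\frac18&\frac18&\frac18&\frac18&\frac18&\frac18&\frac18\\ \frac38&\frac{59}{168}&\frac{17}{56}&\frac{13}{56}&\frac{23}{168}&\frac1{56}&-\frac18&-\frac7{24}\\ \frac58&\frac{85}{168}&\frac7{24}&\frac5{168}&-\frac5{24}&-\frac{55}{168}&-\frac5{24}&\frac7{24}\\ \frac78&\frac{13}{24}&\frac1{24}&-\frac{31}{88}&-\frac{101}{264}&\frac1{88}&\frac{119}{264}&-\frac{49}{264}\\ \frac98&\frac{23}{56}&-\frac38&-\frac{303}{616}&\frac18&\frac{309}{616}&-\frac38&\frac7{88}\\ \frac{11}8&\frac{11}{168}&-\frac{121}{168}&\frac1{56}&\frac{103}{168}&-\frac{363}{728}&\frac{53}{312}&-\frac7{312}\\ \frac{13}8&-\frac{13}{24}&-\frac{13}{24}&\frac{221}{264}&-\frac{13}{24}&\frac{53}{264}&-\frac1{24}&\frac1{264}\\ \frac{15}8&-\frac{35}{24}&\frac78&-\frac{35}{88}&\frac{35}{264}&-\frac{35}{1144}&\frac5{1144}&-\frac1{3432} \end{pmatrix}. \] Consider real vectors $\tilde A=(\tilde A_0,\dots,\tilde A_7)$, $\tilde B=(\tilde B_0,\dots,\tilde B_7)$ satisfying: $\tilde A_0=\tilde B_0=1$; $0\le\tilde A_k\le\tilde B_k$ for $0\le k\le7$; $\sum_k\tilde A_k=4$; $\sum_k\tilde B_k=16$; $\tilde B=2M\tilde A$; $\tilde A_1=\tilde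 B_1$; and $\tilde A_2=\tilde B_2$. Then the unique solution is \[ \tilde A=(1,0,0,0,0,0,3,0),\qquad \tilde B=(1,0,0,\tfrac{49}{11},0,\tfrac{49}{13},3,\tfrac{540}{143}). \]
   Context: This is the normalized intrinsic linear program for two-dimensional codes of depth 3 (detecting the spin-1 and spin-2 sectors) in the spin-$7/2$ irrep $V_{7/2}\cong\mathrm{Sym}^7(\mathbb C^2)$ of $\mathrm{SU}(2)$: $M$ is the unnormalized MacWilliams matrix $M_{k_1k_2}=(-1)^{7+k_1+k_2}(2k_1+1)\{\begin{smallmatrix}7/2&7/2&k_1\\7/2&7/2&k_2\end{smallmatrix}\}$ (Wigner $6j$-symbol), and normalized enumerators are $\tilde A_k=\frac N{K^2}A_k(P,P)$, $\tilde B_k=\frac NKB_k(P,P)$ with $N=8$, $K=2$. *)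

(* Defs.v *)
From mathcomp Require Import all_boot all_order all_algebra.
Set Implicit Arguments. Unset Strict Implicit. Unset Printing Implicit Defensive.
Import Order.TTheory GRing.Theory Num.Theory.
Local Open Scope ring_scope.

Definition Mrows : seq (seq (int * int)) :=
  [:: [:: (1,8); (1,8); (1,8); (1,8); (1,8); (1,8); (1,8); (1,8)];
      [:: (3,8); (59,168); (17,56); (13,56); (23,168); (1,56); (-1,8); (-7,24)];
      [:: (5,8); (85,168); (7,24); (5,168); (-5,24); (-55,168); (-5,24); (7,24)];
      [:: (7,8); (13,24); (1,24); (-31,88); (-101,264); (1,88); (119,264); (-49,264)];
      [:: (9,8); (23,56); (-3,8); (-303,616); (1,8); (309,616); (-3,8); (7,88)];
      [:: (11,8); (11,168); (-121,168); (1,56); (103,168); (-363,728); (53,312); (-7,312)];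
      [:: (13,8); (-13,24); (-13,24); (221,264); (-13,24); (53,264); (-1,24); (1,264)];
      [:: (15,8); (-35,24); (7,8); (-35,88); (35,264); (-35,1144); (5,1144); (-1,3432)]]%Z.

Definition qfrac (R : fieldType) (p : int * int) : R := p.1%:~R / p.2%:~R.

Definition Mmat (R : fieldType) : 'M[R]_8 :=
  \matrix_(i < 8, j < 8) qfrac R (nth (0%Z, 1%Z) (nth [::] Mrows i) j).

Definition vec8 (R : fieldType) (s : seq R) : 'cV[R]_8 := \col_(i < 8) nth 0 s i.

Definition A_sol (R : fieldType) : 'cV[R]_8 := vec8 [:: 1; 0; 0; 0; 0; 0; 3; 0].
Definition B_sol (R : fieldType) : 'cV[R]_8 :=
  vec8 [:: 1; 0; 0; 49 / 11; 0; 49 / 13; 3; 540 / 143].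

(* The normalized intrinsic LP constraints (depth 3, spin 7/2, K = 2). *)
Definition LP_feasible (R : realFieldType) (A B : 'cV[R]_8) : Prop :=
  [/\ A ord0 ord0 = 1 /\ B ord0 ord0 = 1,
      (forall k : 'I_8, 0 <= A k ord0 <= B k ord0),
      \sum_(k < 8) A k ord0 = 4 /\ \sum_(k < 8) B k ord0 = 16,
      B = 2%:R *: (Mmat R *m A) &
      A (inord 1) ord0 = B (inord 1) ord0 /\
      A (inord 2) ord0 = B (inord 2) ord0].

(* Main.v *)
Require Import Defs.
From mathcomp Require Import all_boot all_order all_algebra ring lra.
Import Order.TTheory GRing.Theory Num.Theory.
Local Open Scope ring_scope.

Lemma sumE (R : realFieldType) (f : 'I_8 -> R) :
  \sum_(k < 8) f k = \sum_(j <- iota 0 8) f (inord j).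
Proof.
change (iota 0 8) with (index_iota 0 8); rewrite big_mkord; apply: eq_bigr => k _; by rewrite inord_val.
Qed.

Lemma rowE (R : realFieldType) (A : 'cV[R]_8) (i : nat) : (i < 8)%N ->
  (Mmat R *m A) (inord i) ord0 =
  \sum_(j <- iota 0 8) qfrac R (nth (0%Z, 1%Z) (nth [::] Mrows i) j) * A (inord j) ord0.
Proof.
move=> Hi; rewrite mxE sumE big_seq [RHS]big_seq; apply: eq_bigr => j.
rewrite mem_iota add0n => /andP [_ Hj].
by rewrite /Mmat mxE !inordK.
Qed.

Lemma vecE (R : realFieldType) (s : seq R) (k : nat) : (k < 8)%N ->
  vec8 s (inord k) ord0 = nth 0 s k.
Proof. by move=> Hk; rewrite /vec8 mxE inordK. Qed.


Lemma ord0E : (inord 0 : 'I_8) = ord0.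
Proof. by apply/val_inj; rewrite /= inordK. Qed.

Theorem mainTheorem13 (R : realFieldType) (A B : 'cV[R]_8) :
  LP_feasible A B <-> (A = A_sol R /\ B = B_sol R).
Proof.
split.
- move=> [[HA0 HB0] Hle [SA SB] HBM [H1 H2]].
  have e i : (i < 8)%N -> B (inord i) ord0 = 2%:R * (Mmat R *m A) (inord i) ord0.
    by move=> _; rewrite HBM !mxE.
  have e0 := e 0%N isT; have e1 := e 1%N isT; have e2 := e 2%N isT; have e3 := e 3%N isT.
  have e4 := e 4%N isT; have e5 := e 5%N isT; have e6 := e 6%N isT; have e7 := e 7%N isT.
  rewrite rowE // !big_cons big_nil /qfrac /= in e0. rewrite rowE // !big_cons big_nil /qfrac /= in e1. rewrite rowE // !big_cons big_nil /qfrac /= in e2. rewrite rowE // !big_cons big_nil /qfrac /= in e3. rewrite rowE // !big_cons big_nil /qfrac /= in e4. rewrite rowE // !big_cons big_nil /qfrac /= in e5. rewrite rowE // !big_cons big_nil /qfrac /= in e6. rewrite rowE // !big_cons big_nil /qfrac /= in e7.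
  rewrite sumE !big_cons big_nil /= in SA.
  rewrite sumE !big_cons big_nil /= in SB.
  rewrite -ord0E in HA0 HB0.
  have /andP [l0 m0] := Hle (inord 0); have /andP [l1 m1] := Hle (inord 1).
  have /andP [l2 m2] := Hle (inord 2); have /andP [l3 m3] := Hle (inord 3).
  have /andP [l4 m4] := Hle (inord 4); have /andP [l5 m5] := Hle (inord 5).
  have /andP [l6 m6] := Hle (inord 6); have /andP [l7 m7] := Hle (inord 7).
  clear Hle HBM e.
  have key : A (inord 1) ord0 + A (inord 2) ord0 + A (inord 3) ord0 + A (inord 4) ord0
    + A (inord 5) ord0 + A (inord 7) ord0 <= 0 by lra.
  clear m1 m2 m3 m4 m5 m6 m7 e0 SB H1 H2.
  have va1 : A (inord 1) ord0 = 0 by clear -key l1 l2 l3 l4 l5 l7; lra.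
  have va2 : A (inord 2) ord0 = 0 by clear -key l1 l2 l3 l4 l5 l7; lra.
  have va3 : A (inord 3) ord0 = 0 by clear -key l1 l2 l3 l4 l5 l7; lra.
  have va4 : A (inord 4) ord0 = 0 by clear -key l1 l2 l3 l4 l5 l7; lra.
  have va5 : A (inord 5) ord0 = 0 by clear -key l1 l2 l3 l4 l5 l7; lra.
  have va7 : A (inord 7) ord0 = 0 by clear -key l1 l2 l3 l4 l5 l7; lra.
  have va6 : A (inord 6) ord0 = 3 by clear -va1 va2 va3 va4 va5 va7 SA HA0; lra.
  rewrite va1 va2 va3 va4 va5 va6 va7 HA0 in e1 e2 e3 e4 e5 e6 e7.
  clear -va1 va2 va3 va4 va5 va6 va7 e1 e2 e3 e4 e5 e6 e7 HA0 HB0.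
  split; apply/matrixP => i j; rewrite (ord1 j) -(inord_val i);
    have := ltn_ord i; move: (nat_of_ord i) => n Hn; rewrite vecE //;
    case: n Hn => [|[|[|[|[|[|[|[|n]]]]]]]] Hn //=; lra.
- move=> [-> ->]; rewrite /A_sol /B_sol; split.
  + by rewrite -ord0E !vecE.
  + by move=> k; rewrite -(inord_val k); have := ltn_ord k; move: (nat_of_ord k) => n Hn;
      rewrite !vecE //; case: n Hn => [|[|[|[|[|[|[|[|n]]]]]]]] Hn //=; apply/andP; split; lra.
  + by rewrite !sumE !big_cons !big_nil !vecE //=; split; lra.
  + apply/matrixP => i j; rewrite (ord1 j) -(inord_val i);
      have := ltn_ord i; move: (nat_of_ord i) => n Hn; rewrite [RHS]mxE rowE //
      !big_cons big_nil /qfrac !vecE //=;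
      case: n Hn => [|[|[|[|[|[|[|[|n]]]]]]]] Hn //=; lra.
  + by rewrite !vecE //=.
Qed.
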